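(* Let $\mathsf{P}$ be a program of $\mathcal{H}$. If $\mathsf{P}$ is stratified, then the perfect model of $\mathsf{Gr(P)}$ exists, and consequently the two-valued Herbrand interpretation $\mathcal{N}_\mathsf{P}$ of $\mathsf{P}$ is defined; moreover $\mathcal{N}_\mathsf{P}$ coincides with the well-founded Herbrand interpretation $\mathcal{M}_\mathsf{P}$ of $\mathsf{P}$.
   Context: Types of $\mathcal{H}$: base types $\iota,o$; predicate types $\pi::=o\mid\rho\to\pi$; argument types $\rho::=\iota\mid\pi$. Terms are built from predicate/individual variables and constants and function symbols (types $\iota^n\to\iota$) by typed application; atoms are terms of type $o$; literals are atoms, equalities $(\mathsf{E}_1\approx\mathsf{E}_2)$ of terms of type $\iota$, and negated atoms $\sim\mathsf{E}$. A clause is $\mathsf{p}\,\mathsf{V}_1\cdots\mathsf{V}_n\leftarrow\mathsf{L}_1,\dots,\mathsf{L}_m$ with $\mathsf{p}$ a predicate constant of type $\rho_1\to\cdots\to\rho_n\to o$, distinct variables $\mathsf{V}_i:\rho_i$, literals $\mathsf{L}_j$; a program is a finite set of clauses. Stratified: predicate type $\pi$ is greater than $\pi'$ if $\pi=\rho_1\to\cdots\to\rho_n\to\pi'$, $n\ge1$. $\mathsf{P}$ is stratified if its predicate constants can be partitioned into finitely many sets $S_1,\dots,S_r$ ($\mathit{stratum}(\mathsf{r})=i$ iff $\mathsf{r}\in S_i$) such that for every clause $\mathsf{H}\leftarrow\mathsf{A}_1,\dots,\mathsf{A}_m,\sim\mathsf{B}_1,\dots,\sim\mathsf{B}_n$ with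 head predicate constant $\mathsf{p}$: if $\mathsf{A}_i$ starts with predicate constant $\mathsf{q}$ then $\mathit{stratum}(\mathsf{q})\le\mathit{stratum}(\mathsf{p})$; if $\mathsf{A}_i$ starts with predicate variable $\mathsf{Q}$ then $\mathit{stratum}(\mathsf{q})\le\mathit{stratum}(\mathsf{p})$ for all predicate constants $\mathsf{q}$ of $\mathsf{P}$ of type greater than or equal to that of $\mathsf{Q}$; if $\mathsf{B}_i$ starts with predicate constant $\mathsf{q}$ then $\mathit{stratum}(\mathsf{q})<\mathit{stratum}(\mathsf{p})$; if $\mathsf{B}_i$ starts with predicate variable $\mathsf{Q}$ then $\mathit{stratum}(\mathsf{q})<\mathit{stratum}(\mathsf{p})$ for all predicate constants $\mathsf{q}$ of $\mathsf{P}$ of type greater than or equal to that of $\mathsf{Q}$. Semantics: $U_{\mathsf{P},\rho}$ is the set of ground terms of type $\rho$ built from symbols of $\mathsf{P}$; $\mathsf{Gr(P)}$ is the set of all clauses obtained from clauses of $\mathsf{P}$ by substituting for each variable an element of $U_{\mathsf{P},\rho}$ of its type, regarded as a (possibly infinite) propositional program over the ground atoms $U_{\mathsf{P},o}$ (ground equalities being constants true/false according to syntactic identity). The perfect model of $\mathsf{Gr(P)}$ is the standard (two-valued) perfect model of a propositional program (in the sense of Przymusinski), when it exists; the well-founded model is the standard three-valued well-founded model. $\mathcal{N}_\mathsf{P}$ (resp. $\mathcal{M}_\mathsf{P}$) is the Herbrand interpretation of $\mathsf{P}$ — symbols interpreted by themselves, application syntactic — whose valuation assigns to every ground atom its value in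 the perfect model (resp. well-founded model) of $\mathsf{Gr(P)}$; Herbrand interpretations are identified when their valuation functions coincide. *)

(* Defs.v *)
From Stdlib Require Import List Arith.
Import ListNotations.

Inductive ty : Type :=
| TI : ty
| TO : ty
| TArr : ty -> ty -> ty.

Definition ty_eq_dec (a b : ty) : {a = b} + {a <> b}.
Proof. decide equality. Defined.

Fixpoint is_pred_ty (t : ty) : Prop :=
  match t with
  | TO => True
  | TArr r p => (r = TI \/ is_pred_ty r) /\ is_pred_ty p
  | TI => False
  end.

Definition is_arg_ty (t : ty) : Prop := t = TI \/ is_pred_ty t.

Fixpoint fun_ty (n : nat) : ty :=
  match n with
  | 0 => TI
  | S k => TArr TI (fun_ty k)
  end.

Definition const_ty_ok (t : ty) : Prop :=
  t = TI \/ (exists n, 1 <= n /\ t = fun_ty n) \/ is_pred_ty t.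

Definition var_ty_ok (t : ty) : Prop := t = TI \/ is_pred_ty t.

Fixpoint ty_ge (t t' : ty) : Prop :=
  t = t' \/ match t with TArr _ b => ty_ge b t' | _ => False end.

Inductive term : Type :=
| TVar : nat -> ty -> term
| TCon : nat -> ty -> term
| TApp : term -> term -> term.

Definition term_eq_dec (a b : term) : {a = b} + {a <> b}.
Proof. decide equality; first [apply ty_eq_dec | apply Nat.eq_dec]. Defined.

Inductive has_type : term -> ty -> Prop :=
| ht_var : forall n t, var_ty_ok t -> has_type (TVar n t) t
| ht_con : forall n t, const_ty_ok t -> has_type (TCon n t) t
| ht_app : forall f a r s, has_type f (TArr r s) -> has_type a r ->
    has_type (TApp f a) s.

Fixpoint head_of (t : term) : term :=
  match t with
  | TApp f _ => head_of f
  | x => x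
  end.

Fixpoint consts_term (t : term) : list (nat * ty) :=
  match t with
  | TVar _ _ => []
  | TCon n s => [(n, s)]
  | TApp f a => consts_term f ++ consts_term a
  end.

Fixpoint vars_term (t : term) : list (nat * ty) :=
  match t with
  | TVar n s => [(n, s)]
  | TCon _ _ => []
  | TApp f a => vars_term f ++ vars_term a
  end.

Definition ground (t : term) : Prop := vars_term t = [].

Inductive literal : Type :=
| LAtom : term -> literal
| LEq : term -> term -> literal
| LNeg : term -> literal.

(* clause   p V_1 ... V_n <- L_1, ..., L_m *)
Record clause : Type := mkClause {
  cl_pred : nat * ty;
  cl_hvars : list (nat * ty);
  cl_body : list literal }.

Definition program := list clause.

Definition arrows (args : list ty) (res : ty) : ty :=
  fold_right TArr res args.

Definition wf_literal (l : literal) : Prop :=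
  match l with
  | LAtom e => has_type e TO
  | LEq e1 e2 => has_type e1 TI /\ has_type e2 TI
  | LNeg e => has_type e TO
  end.

Definition wf_clause (c : clause) : Prop :=
  is_pred_ty (snd (cl_pred c)) /\
  snd (cl_pred c) = arrows (map snd (cl_hvars c)) TO /\
  NoDup (cl_hvars c) /\
  (forall v, In v (cl_hvars c) -> is_arg_ty (snd v)) /\
  (forall l, In l (cl_body c) -> wf_literal l).

Definition wf_program (P : program) : Prop :=
  forall c, In c P -> wf_clause c.

Definition consts_literal (l : literal) : list (nat * ty) :=
  match l with
  | LAtom e => consts_term e
  | LEq e1 e2 => consts_term e1 ++ consts_term e2
  | LNeg e => consts_term e
  end.

Definition vars_literal (l : literal) : list (nat * ty) :=
  match l with
  | LAtom e => vars_term e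
  | LEq e1 e2 => vars_term e1 ++ vars_term e2
  | LNeg e => vars_term e
  end.

Definition consts_clause (c : clause) : list (nat * ty) :=
  cl_pred c :: flat_map consts_literal (cl_body c).

Definition vars_clause (c : clause) : list (nat * ty) :=
  cl_hvars c ++ flat_map vars_literal (cl_body c).

Definition consts_prog (P : program) : list (nat * ty) :=
  flat_map consts_clause P.

Definition pred_const_of (P : program) (q : nat * ty) : Prop :=
  In q (consts_prog P) /\ is_pred_ty (snd q).

Definition stratified (P : program) : Prop :=
  exists stratum : nat * ty -> nat,
  forall c, In c P ->
  forall l, In l (cl_body c) ->
  match l with
  | LAtom e =>
      match head_of e with
      | TCon n s => stratum (n, s) <= stratum (cl_pred c)
      | TVar _ s => forall q, pred_const_of P q -> ty_ge (snd q) s ->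
                      stratum q <= stratum (cl_pred c)
      | _ => True
      end
  | LNeg e =>
      match head_of e with
      | TCon n s => stratum (n, s) < stratum (cl_pred c)
      | TVar _ s => forall q, pred_const_of P q -> ty_ge (snd q) s ->
                      stratum q < stratum (cl_pred c)
      | _ => True
      end
  | LEq _ _ => True
  end.
(* Since P is finite, any such function takes finitely many values on the
   predicate constants of P, i.e. it defines a partition into finitely
   many strata S_1,...,S_r. *)

Definition herbrand_univ (P : program) (r : ty) (t : term) : Prop :=
  has_type t r /\ ground t /\ (forall q, In q (consts_term t) -> In q (consts_prog P)).

Definition ground_atom (P : program) (t : term) : Prop := herbrand_univ P TO t.

(* Propositional (possibly infinite) programs over an atom type A *)
Inductive plit (A : Type) : Type :=
| PPos : A -> plit A
| PNeg : A -> plit A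
| PConst : bool -> plit A.
Arguments PPos {A} _.
Arguments PNeg {A} _.
Arguments PConst {A} _.

Record prule (A : Type) : Type := mkPRule { rhead : A; rbody : list (plit A) }.
Arguments mkPRule {A} _ _.
Arguments rhead {A} _.
Arguments rbody {A} _.

Definition pprogram (A : Type) := prule A -> Prop.

Fixpoint subst (th : nat -> ty -> term) (t : term) : term :=
  match t with
  | TVar n s => th n s
  | TCon n s => TCon n s
  | TApp f a => TApp (subst th f) (subst th a)
  end.

Definition inst_literal (th : nat -> ty -> term) (l : literal) : plit term :=
  match l with
  | LAtom e => PPos (subst th e)
  | LNeg e => PNeg (subst th e)
  | LEq e1 e2 =>
      PConst (if term_eq_dec (subst th e1) (subst th e2) then true else false)
  end.

Definition inst_clause (th : nat -> ty -> term) (c : clause) : prule term :=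
  mkPRule
    (fold_left (fun acc v => TApp acc (th (fst v) (snd v))) (cl_hvars c)
       (TCon (fst (cl_pred c)) (snd (cl_pred c))))
    (map (inst_literal th) (cl_body c)).

Definition Gr (P : program) : pprogram term :=
  fun r => exists c th, In c P /\
    (forall v, In v (vars_clause c) -> herbrand_univ P (snd v) (th (fst v) (snd v))) /\
    r = inst_clause th c.

Section Propositional.
Variable A : Type.
Variable Pr : pprogram A.

Definition lit_true2 (M : A -> Prop) (l : plit A) : Prop :=
  match l with
  | PPos a => M a
  | PNeg a => ~ M a
  | PConst b => b = true
  end.

Definition is_model (M : A -> Prop) : Prop :=
  forall r, Pr r -> (forall l, In l (rbody r) -> lit_true2 M l) -> M (rhead r).

Definition dep_edge (a b : A) (neg : bool) : Prop :=
  exists r, Pr r /\ rhead r = a /\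
    ((In (PPos b) (rbody r) /\ neg = false) \/ (In (PNeg b) (rbody r) /\ neg = true)).

Inductive dep_path : A -> A -> bool -> Prop :=
| dp_one : forall a b n, dep_edge a b n -> dep_path a b n
| dp_step : forall a b c n m, dep_edge a b n -> dep_path b c m ->
    dep_path a c (n || m).

Definition prio_lt (a b : A) : Prop := dep_path a b true.

Definition preferable (N M : A -> Prop) : Prop :=
  ~ (forall a, N a <-> M a) /\
  forall a, N a -> ~ M a -> exists b, M b /\ ~ N b /\ prio_lt a b.

Definition perfect_model (M : A -> Prop) : Prop :=
  is_model M /\ ~ (exists N, is_model N /\ preferable N M).

(* Well-founded model (Van Gelder, Ross, Schlipf): a partial interpretation
   is a pair (T, F) of sets of atoms (true atoms, false atoms). *)
Definition lit_true3 (T F : A -> Prop) (l : plit A) : Prop :=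
  match l with
  | PPos a => T a
  | PNeg a => F a
  | PConst b => b = true
  end.

Definition lit_false3 (T F : A -> Prop) (l : plit A) : Prop :=
  match l with
  | PPos a => F a
  | PNeg a => T a
  | PConst b => b = false
  end.

Definition unfounded (T F : A -> Prop) (U : A -> Prop) : Prop :=
  forall a, U a -> forall r, Pr r -> rhead r = a ->
    (exists l, In l (rbody r) /\ lit_false3 T F l) \/
    (exists b, In (PPos b) (rbody r) /\ U b).

Definition GUS (T F : A -> Prop) (a : A) : Prop :=
  exists U, unfounded T F U /\ U a.

Definition TP (T F : A -> Prop) (a : A) : Prop :=
  exists r, Pr r /\ rhead r = a /\ forall l, In l (rbody r) -> lit_true3 T F l.

(* fixpoint of W_P(I) = T_P(I) u ~U_P(I) *)
Definition W_fixpoint (T F : A -> Prop) : Prop :=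
  (forall a, T a <-> TP T F a) /\ (forall a, F a <-> GUS T F a).

Definition well_founded_model (T F : A -> Prop) : Prop :=
  W_fixpoint T F /\
  forall T' F', W_fixpoint T' F' ->
    (forall a, T a -> T' a) /\ (forall a, F a -> F' a).

End Propositional.

Arguments is_model {A} _ _.
Arguments perfect_model {A} _ _.
Arguments well_founded_model {A} _ _ _.

(* Main.v *)
Require Import Defs.
From Stdlib Require Import List Arith Lia Classical Bool.
Import ListNotations.

Section Strat.
Variable A : Type.
Variable Pr : pprogram A.
Variable sg : A -> nat.
Hypothesis Hpos : forall r b, Pr r -> In (PPos b) (rbody r) -> sg b <= sg (rhead r).
Hypothesis Hneg : forall r b, Pr r -> In (PNeg b) (rbody r) -> sg b < sg (rhead r).

Inductive lfp (N : A -> Prop) : A -> Prop :=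
| lfp_r : forall r, Pr r ->
    (forall b, In (PPos b) (rbody r) -> lfp N b) ->
    (forall b, In (PNeg b) (rbody r) -> ~ N b) ->
    (forall c, In (PConst c) (rbody r) -> c = true) -> lfp N (rhead r).

Lemma lfp_local : forall N1 N2 s, (forall b, sg b < s -> (N1 b <-> N2 b)) ->
  forall a, lfp N1 a -> sg a <= s -> lfp N2 a.
Proof.
  intros N1 N2 s H a Ha. induction Ha as [r Hr Hp IHp Hn Hc]. intros Hs.
  constructor; auto.
  - intros b Hb. apply IHp; auto. specialize (Hpos r b Hr Hb); lia.
  - intros b Hb Nb. apply (Hn b Hb). apply H; [specialize (Hneg r b Hr Hb); lia | exact Nb].
Qed.

Fixpoint Mk (k : nat) : A -> Prop :=
  match k with 0 => lfp (fun _ => False) | S k' => lfp (Mk k') end.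

Lemma Mk_stable : forall k b, sg b <= k -> (Mk k b <-> Mk (S k) b).
Proof.
  induction k; intros b Hb.
  - split; intro H; eapply lfp_local; eauto; intros; lia.
  - change (lfp (Mk k) b <-> lfp (Mk (S k)) b).
    split; intro H; eapply lfp_local; eauto; intros c Hc;
      [apply IHk | symmetry; apply IHk]; lia.
Qed.

Lemma Mk_mono : forall k j b, k <= j -> sg b <= k -> (Mk k b <-> Mk j b).
Proof.
  intros k j b Hkj. induction Hkj; intros Hb; [tauto|].
  rewrite IHHkj by lia. apply Mk_stable. lia.
Qed.

Definition M a := Mk (sg a) a.

Lemma M_Mk : forall k b, sg b <= k -> (M b <-> Mk k b).
Proof. intros. unfold M. apply Mk_mono; lia. Qed.

Lemma M_fix : forall a, M a <-> lfp M a.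
Proof.
  intro a. unfold M at 1. rewrite Mk_stable by lia.
  change (lfp (Mk (sg a)) a <-> lfp M a).
  split; intro H; eapply lfp_local; eauto; intros b Hb;
   [symmetry|]; apply M_Mk; lia.
Qed.

Lemma M_model : is_model Pr M.
Proof.
  intros r Hr Hb. apply M_fix. constructor; auto.
  - intros b Hin. apply M_fix. exact (Hb _ Hin).
  - intros b Hin. exact (Hb _ Hin).
  - intros c Hin. exact (Hb _ Hin).
Qed.

Lemma edge_sg : forall a b n, dep_edge A Pr a b n -> sg b <= sg a /\ (n = true -> sg b < sg a).
Proof.
  intros a b n [r [Hr [Ha [[Hi Hn]|[Hi Hn]]]]]; subst.
  - split; [apply Hpos; auto | discriminate].
  - pose proof (Hneg r b Hr Hi). split; [lia | auto].
Qed.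

Lemma path_sg : forall a b n, dep_path A Pr a b n -> sg b <= sg a /\ (n = true -> sg b < sg a).
Proof.
  induction 1 as [a b n He | a b c n m He Hp IH].
  - apply edge_sg; auto.
  - destruct (edge_sg _ _ _ He) as [E1 E2]. destruct IH as [I1 I2].
    split; [lia|]. intro H.
    destruct n; [specialize (E2 eq_refl); lia|].
    destruct m; [specialize (I2 eq_refl); lia| discriminate].
Qed.

Lemma min_exists : forall (D : A -> Prop) a, D a ->
  exists m, D m /\ forall b, D b -> sg m <= sg b.
Proof.
  intros D.
  assert (H : forall n a, sg a <= n -> D a -> exists m, D m /\ forall b, D b -> sg m <= sg b).
  { induction n; intros a Ha Da;
    (destruct (classic (exists b, D b /\ sg b < sg a)) as [[b [Db Hb]]|Hno];
     [ try (exfalso; lia); apply (IHn b); auto; lia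
     | exists a; split; auto; intros b Db;
       destruct (le_lt_dec (sg a) (sg b)); auto; exfalso; apply Hno; eauto ]). }
  intros a Da. eapply H; eauto.
Qed.

Lemma lfp_into_model : forall N s, is_model Pr N -> (forall b, sg b < s -> (M b <-> N b)) ->
  forall x, lfp M x -> sg x <= s -> N x.
Proof.
  intros N s HN Hag x Hx. induction Hx as [r Hr Hp IHp Hn Hc]. intros Hs.
  apply HN; auto. intros l Hl. destruct l as [b|b|c]; simpl.
  - apply IHp; auto. specialize (Hpos r b Hr Hl); lia.
  - intro Nb. apply (Hn b Hl). apply Hag; auto. specialize (Hneg r b Hr Hl); lia.
  - apply Hc; auto.
Qed.

Lemma M_perfect : perfect_model Pr M.
Proof.
  split; [apply M_model|]. intros [N [HN [Hne Hpref]]].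
  apply not_all_ex_not in Hne. destruct Hne as [a Ha].
  destruct (min_exists (fun x => ~ (N x <-> M x)) a Ha) as [m [Dm Hmin]].
  assert (Hag : forall b, sg b < sg m -> (M b <-> N b)).
  { intros b Hb. apply NNPP; intro Hd. assert (sg m <= sg b) by (apply Hmin; tauto). lia. }
  destruct (classic (M m)) as [Mm | nMm].
  - apply Dm. split; intro; auto. eapply lfp_into_model; eauto. apply M_fix; auto.
  - assert (Nm : N m) by tauto.
    destruct (Hpref m Nm nMm) as [b [Mb [nNb Hp]]].
    destruct (path_sg _ _ _ Hp) as [_ Hlt]. specialize (Hlt eq_refl).
    assert (sg m <= sg b) by (apply Hmin; tauto). lia.
Qed.

Lemma M_unique : forall M', perfect_model Pr M' -> forall a, M' a <-> M a.
Proof.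
  intros M' [HM' Hno] a. apply NNPP; intro Hd.
  destruct (min_exists (fun x => ~ (M' x <-> M x)) a Hd) as [m [Dm Hmin]].
  set (s := sg m).
  assert (Hag : forall b, sg b < s -> (M b <-> M' b)).
  { intros b Hb. apply NNPP; intro Hd'. assert (sg m <= sg b) by (apply Hmin; tauto). unfold s in *; lia. }
  assert (Msub : forall x, sg x <= s -> M x -> M' x).
  { intros x Hx Mx. eapply lfp_into_model; eauto. apply M_fix; auto. }
  assert (M'm : M' m) by (destruct (classic (M m)); [exfalso; apply Dm; split; auto | tauto]).
  assert (nMm : ~ M m) by tauto.
  apply Hno.
  exists (fun x => (sg x <= s /\ M x) \/ (s < sg x /\ (M' x \/ exists b, M' b /\ ~ M b /\ sg b = s /\ prio_lt A Pr x b))).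
  split.
  - intros r Hr Hb. destruct (le_lt_dec (sg (rhead r)) s) as [Hh|Hh].
    + left. split; auto. apply M_model; auto. intros l Hl. specialize (Hb l Hl).
      destruct l as [b|b|c]; simpl in *.
      * pose proof (Hpos r b Hr Hl). destruct Hb as [[_ Hb]|[Hb _]]; auto. lia.
      * pose proof (Hneg r b Hr Hl). intro Mb. apply Hb. left. split; auto. lia.
      * auto.
    + right. split; auto.
      destruct (classic (forall l, In l (rbody r) -> lit_true2 A M' l)) as [Hall|Hnall].
      * left. apply HM'; auto.
      * right. apply not_all_ex_not in Hnall. destruct Hnall as [l Hl].
        apply imply_to_and in Hl. destruct Hl as [Hl Hf].
        specialize (Hb l Hl). destruct l as [b|b|c]; simpl in *.
        -- destruct Hb as [[Hbs Mb]|[Hbs [M'b|[c [M'c [nMc [Hcs Hpc]]]]]]].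
           ++ exfalso; apply Hf; apply Msub; auto.
           ++ contradiction.
           ++ exists c. split; auto. split; auto. split; auto.
              unfold prio_lt. change true with (orb false true).
              eapply dp_step; [|exact Hpc]. exists r; split; auto; split; auto.
        -- apply NNPP in Hf. pose proof (Hneg r b Hr Hl).
           assert (nMb : ~ M b) by (intro Mb; apply Hb; left; split; auto;
             destruct (le_lt_dec (sg b) s); auto; exfalso; apply Hb; right; split; auto).
           assert (Hbs : sg b = s).
           { destruct (lt_eq_lt_dec (sg b) s) as [[H1|H1]|H1]; auto.
             - exfalso. apply nMb. apply Hag; auto.
             - exfalso. apply Hb. right. split; auto. }
           exists b. split; auto. split; auto. split; auto.
           apply dp_one. exists r; split; auto; split; auto.
        -- contradiction.
  - split.
    + intro H. apply (proj2 (H m)) in M'm. destruct M'm as [[_ Mm]|[Hl _]]; [tauto| unfold s in Hl; lia].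
    + intros x [[Hx Mx]|[Hx [M'x|[c [M'c [nMc [Hcs Hpc]]]]]]] nM'x.
      * exfalso. apply nM'x. apply Msub; auto.
      * contradiction.
      * exists c. split; auto. split; auto. intros [[_ Mc]|[Hc _]]; [tauto|lia].
Qed.

Lemma M_W : W_fixpoint A Pr M (fun a => ~ M a).
Proof.
  split.
  - intro a; split.
    + intro Ma. apply M_fix in Ma. destruct Ma as [r Hr Hp Hn Hc].
      exists r; split; [auto|split; [reflexivity|]].
      intros l Hl; destruct l; simpl; [apply M_fix; apply Hp | apply Hn | apply Hc]; auto.
    + intros [r [Hr [Heq Hb]]]. subst a. apply M_model; [auto|].
      intros l Hl; specialize (Hb l Hl); destruct l; simpl in *; auto.
  - intro a; split.
    + intro nMa. exists (fun x => ~ M x). split; auto. intros x nMx r Hr Heq. left. subst x.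
      apply NNPP; intro Hno. apply nMx. apply M_model; auto. intros l Hl.
      apply NNPP; intro Hf. apply Hno. exists l; split; auto.
      destruct l as [b|b|b]; simpl in *; [exact Hf | apply NNPP; exact Hf |].
      destruct b; [exfalso; auto | reflexivity].
    + intros [U [HU Ua]] Ma.
      assert (H : forall x, lfp M x -> ~ U x).
      { intros x Hx. induction Hx as [r Hr Hp IHp Hn Hc]. intro Ux.
        destruct (HU _ Ux r Hr eq_refl) as [[l [Hl Hf]] | [b [Hb Ub]]].
        - destruct l as [b|b|c]; simpl in Hf.
          + apply Hf. apply M_fix. auto.
          + exact (Hn b Hl Hf).
          + rewrite (Hc c Hl) in Hf. discriminate.
        - exact (IHp b Hb Ub). }
      exact (H a (proj1 (M_fix a) Ma) Ua).
Qed.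

Lemma W_least : forall T' F', W_fixpoint A Pr T' F' ->
  forall a, (M a -> T' a) /\ (~ M a -> F' a).
Proof.
  intros T' F' [HT HF].
  assert (key : forall s, (forall b, sg b < s -> (M b -> T' b) /\ (~M b -> F' b)) ->
     forall a, sg a <= s -> (M a -> T' a) /\ (~ M a -> F' a)).
  { intros s IH.
    assert (HTs : forall x, lfp M x -> sg x <= s -> T' x).
    { intros x Hx; induction Hx as [r Hr Hp IHp Hn Hc]; intro Hs. apply HT.
      exists r; split; [auto|split; [reflexivity|]]. intros l Hl; destruct l as [b|b|c]; simpl.
      - apply IHp; auto. pose proof (Hpos r b Hr Hl); lia.
      - pose proof (Hneg r b Hr Hl). apply (proj2 (IH b ltac:(lia))). apply Hn; auto.
      - apply Hc; auto. }
    intros a Ha; split.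
    - intro Ma. apply HTs; auto. apply M_fix; auto.
    - intro nMa. apply HF. exists (fun x => sg x <= s /\ ~ M x). split; [|auto].
      intros x [Hxs nMx] r Hr Heq. subst x.
      destruct (classic (exists b, In (PPos b) (rbody r) /\ ~ M b)) as [[b [Hb nMb]] | Hno].
      + right. exists b. split; auto. split; auto. pose proof (Hpos r b Hr Hb); lia.
      + left. apply NNPP; intro Hno2. apply nMx. apply M_model; auto. intros l Hl.
        destruct l as [b|b|c]; simpl.
        * apply NNPP; intro nMb. apply Hno; eauto.
        * intro Mb. apply Hno2. exists (PNeg b); split; auto. simpl.
          pose proof (Hneg r b Hr Hl). apply (proj1 (IH b ltac:(lia))); auto.
        * destruct c; auto. exfalso; apply Hno2. exists (PConst false); split; [auto|reflexivity]. }
  assert (all : forall s a, sg a < s -> (M a -> T' a) /\ (~ M a -> F' a)).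
  { induction s; intros a Ha; [lia|]. apply (key s); [exact IHs | lia]. }
  intro a; apply (all (S (sg a))); lia.
Qed.

End Strat.

Lemma ty_ge_refl : forall t, ty_ge t t.
Proof. destruct t; simpl; auto. Qed.

Lemma ty_ge_arr : forall x r s, ty_ge x (TArr r s) -> ty_ge x s.
Proof.
  induction x; simpl; intros r s [H|H]; try discriminate; try contradiction.
  - injection H; intros; subst. right. apply ty_ge_refl.
  - right. eapply IHx2; eauto.
Qed.

Lemma ty_ge_trans : forall a b c, ty_ge a b -> ty_ge b c -> ty_ge a c.
Proof.
  induction a; simpl; intros b c [H|H] Hbc; try contradiction; subst; auto.
  right. eapply IHa2; eauto.
Qed.

Lemma fun_ty_not_ge : forall n, ~ ty_ge (fun_ty n) TO.
Proof.
  induction n; simpl; intros [H|H]; try discriminate; auto.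
Qed.

Lemma head_ty : forall t s, has_type t s -> exists n s',
  ((head_of t = TCon n s' /\ const_ty_ok s') \/ head_of t = TVar n s') /\ ty_ge s' s.
Proof.
  induction 1 as [n t Hv | n t Hc | f a r s Hf IHf Ha IHa].
  - exists n, t. split; [right; reflexivity | apply ty_ge_refl].
  - exists n, t. split; [left; auto | apply ty_ge_refl].
  - destruct IHf as [n [s' [Hh Hg]]]. exists n, s'. split; [exact Hh|]. eapply ty_ge_arr; eauto.
Qed.

Lemma head_var_in : forall t n s, head_of t = TVar n s -> In (n, s) (vars_term t).
Proof.
  induction t; simpl; intros n' s' H; try discriminate.
  - injection H; intros; subst; auto.
  - apply in_or_app. left. auto.
Qed.

Lemma head_con_in : forall t n s, head_of t = TCon n s -> In (n, s) (consts_term t).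
Proof.
  induction t; simpl; intros n' s' H; try discriminate.
  - injection H; intros; subst; auto.
  - apply in_or_app. left. auto.
Qed.

Lemma head_subst : forall th e, head_of (subst th e) =
  match head_of e with TVar n s => head_of (th n s) | x => x end.
Proof. induction e; simpl; auto. Qed.

Lemma head_fold : forall (f : nat * ty -> term) l t,
  head_of (fold_left (fun acc v => TApp acc (f v)) l t) = head_of t.
Proof. induction l; simpl; intros; auto. rewrite IHl. reflexivity. Qed.

Definition sgt (stratum : nat * ty -> nat) (t : term) : nat :=
  match head_of t with TCon n s => stratum (n, s) | _ => 0 end.

Lemma var_inst_head : forall P c th e n s,
  wf_literal (LAtom e) ->
  In (LAtom e) (cl_body c) \/ In (LNeg e) (cl_body c) ->
  (forall v, In v (vars_clause c) -> herbrand_univ P (snd v) (th (fst v) (snd v))) ->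
  head_of e = TVar n s ->
  exists q1 q2, head_of (th n s) = TCon q1 q2 /\ pred_const_of P (q1, q2) /\ ty_ge q2 s.
Proof.
  intros P c th e n s Hwf Hin Hth Hh.
  assert (Hv : In (n, s) (vars_clause c)).
  { unfold vars_clause. apply in_or_app. right. apply in_flat_map.
    destruct Hin as [Hin|Hin]; eexists; split; try exact Hin; simpl; apply head_var_in; auto. }
  destruct (Hth _ Hv) as [Ht [Hg Hc]]. simpl in Ht, Hg, Hc.
  simpl in Hwf. destruct (head_ty _ _ Hwf) as [n0 [s0 [[[H1 _]|H1] Hg0]]]; rewrite Hh in H1;
    try discriminate. injection H1; intros; subst n0 s0.
  destruct (head_ty _ _ Ht) as [q1 [q2 [[[H2 Hok]|H2] Hg1]]].
  - exists q1, q2. split; auto. split; [split|auto].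
    + apply Hc. apply head_con_in. exact H2.
    + simpl. assert (Hge : ty_ge q2 TO) by (eapply ty_ge_trans; eauto).
      destruct Hok as [E|[[k [_ E]]|E]]; auto; subst.
      * simpl in Hge. destruct Hge; [discriminate|contradiction].
      * exfalso. eapply fun_ty_not_ge; eauto.
  - exfalso. apply head_var_in in H2. unfold ground in Hg. rewrite Hg in H2. contradiction.
Qed.

Section GrS.
Variable P : program.
Hypothesis HwfP : wf_program P.
Variable stratum : nat * ty -> nat.
Hypothesis Hs : forall c, In c P ->
  forall l, In l (cl_body c) ->
  match l with
  | LAtom e =>
      match head_of e with
      | TCon n s => stratum (n, s) <= stratum (cl_pred c)
      | TVar _ s => forall q, pred_const_of P q -> ty_ge (snd q) s ->
                      stratum q <= stratum (cl_pred c)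
      | _ => True
      end
  | LNeg e =>
      match head_of e with
      | TCon n s => stratum (n, s) < stratum (cl_pred c)
      | TVar _ s => forall q, pred_const_of P q -> ty_ge (snd q) s ->
                      stratum q < stratum (cl_pred c)
      | _ => True
      end
  | LEq _ _ => True
  end.

Lemma sgt_head : forall th c, sgt stratum (rhead (inst_clause th c)) = stratum (cl_pred c).
Proof.
  intros th c. unfold sgt, inst_clause; simpl. rewrite head_fold. simpl.
  destruct (cl_pred c); reflexivity.
Qed.

Lemma Gr_pos : forall r b, Gr P r -> In (PPos b) (rbody r) ->
  sgt stratum b <= sgt stratum (rhead r).
Proof.
  intros r b [c [th [Hc [Hth ->]]]] Hin. rewrite sgt_head.
  simpl in Hin. apply in_map_iff in Hin. destruct Hin as [l [Hl Hin]].
  destruct l as [e|e1 e2|e]; simpl in Hl; try discriminate. injection Hl; intros; subst b.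
  pose proof (Hs c Hc _ Hin) as H. simpl in H.
  assert (Hwf : wf_literal (LAtom e)) by (destruct (HwfP c Hc) as [_ [_ [_ [_ Hb]]]]; apply (Hb _ Hin)).
  unfold sgt. rewrite head_subst.
  destruct (head_of e) as [n s|n s|f a] eqn:Eh; auto; try lia.
  destruct (var_inst_head P c th e n s Hwf (or_introl Hin) Hth Eh) as [q1 [q2 [E [Hp Hg]]]].
  rewrite E. apply H; auto.
Qed.

Lemma Gr_neg : forall r b, Gr P r -> In (PNeg b) (rbody r) ->
  sgt stratum b < sgt stratum (rhead r).
Proof.
  intros r b [c [th [Hc [Hth ->]]]] Hin. rewrite sgt_head.
  simpl in Hin. apply in_map_iff in Hin. destruct Hin as [l [Hl Hin]].
  destruct l as [e|e1 e2|e]; simpl in Hl; try discriminate. injection Hl; intros; subst b.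
  pose proof (Hs c Hc _ Hin) as H. simpl in H.
  assert (Hwf : wf_literal (LAtom e)) by (destruct (HwfP c Hc) as [_ [_ [_ [_ Hb]]]]; apply (Hb _ Hin)).
  unfold sgt. rewrite head_subst.
  destruct (head_of e) as [n s|n s|f a] eqn:Eh; auto; try lia.
  - destruct (var_inst_head P c th e n s Hwf (or_intror Hin) Hth Eh) as [q1 [q2 [E [Hp Hg]]]].
    rewrite E. apply H; auto.
  - (* head_of never TApp *) exfalso. clear -Eh. induction e; simpl in Eh; try discriminate; auto.
Qed.

End GrS.

Theorem corollary1 (P : program) (HwfP : wf_program P) (Hstrat : stratified P) :
  exists M : term -> Prop,
    (* the perfect model of Gr(P) exists (and is unique) *)
    perfect_model (Gr P) M /\
    (forall M', perfect_model (Gr P) M' -> forall a, M' a <-> M a) /\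
    (* the well-founded model exists *)
    (exists T F, well_founded_model (Gr P) T F) /\
    (* N_P = M_P : on every ground atom the well-founded value equals the
       (two-valued) perfect-model value *)
    (forall T F, well_founded_model (Gr P) T F ->
       forall a, ground_atom P a -> (T a <-> M a) /\ (F a <-> ~ M a)).
Proof.
  destruct Hstrat as [stratum Hs].
  pose proof (Gr_pos P HwfP stratum Hs) as Hp.
  pose proof (Gr_neg P HwfP stratum Hs) as Hn.
  exists (M term (Gr P) (sgt stratum)).
  split; [apply M_perfect; auto|].
  split; [apply M_unique; auto|].
  split.
  - exists (M term (Gr P) (sgt stratum)), (fun a => ~ M term (Gr P) (sgt stratum) a).
    split; [apply M_W; auto|]. intros T' F' HW.
    split; intro a; apply (W_least term (Gr P) (sgt stratum) Hp Hn T' F' HW a).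
  - intros T F [HW Hl] a _.
    destruct (Hl _ _ (M_W term (Gr P) (sgt stratum) Hp Hn)) as [H1 H2].
    destruct (W_least term (Gr P) (sgt stratum) Hp Hn T F HW a) as [H3 H4].
    split; split; auto.
Qed.
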